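(* If $\mathscr{S}$ is a relaxed scenario, then $G_{=}(\mathscr{S})$ is a perfect graph.
   Context: All trees are planted phylogenetic trees: a tree $T$ has a distinguished vertex $0_T$ of degree $1$ whose unique neighbor $\rho_T$ is the root, and every vertex other than $0_T$ and the leaves $L(T)$ has at least two children. For $x,y\in V(T)$ write $y\preceq_T x$ if $x$ lies on the path from $0_T$ to $y$; edges are written $uv$ with $v\prec_T u$. $\mathrm{lca}_T$ denotes the last common ancestor. A time map for $T$ is $\tau_T\colon V(T)\to\mathbb{R}$ with $\tau_T(x)<\tau_T(y)$ whenever $x\prec_T y$. A relaxed scenario $\mathscr{S}=(T,S,\sigma,\mu,\tau_T,\tau_S)$ consists of a gene tree $T$ with time map $\tau_T$, a species tree $S$ with time map $\tau_S$, a map $\sigma\colon L(T)\to M$ with $M\subseteq L(S)$, and a map $\mu\colon V(T)\to V(S)\cup E(S)$ such that (S0) $\mu(x)=0_S$ iff $x=0_T$; (S1) $\mu(x)\in L(S)$ iff $x\in L(T)$, in which case $\mu(x)=\sigma(x)$; (S2) if $\mu(x)\in V(S)$ then $\tau_S(\mu(x))=\tau_T(x)$; (S3) if $\mu(x)=uv\in E(S)$ then $\tau_S(v)<\tau_T(x)<\tau_S(u)$. The EDT graph $G_{=}(\mathscr{S})$ has vertex set $L(T)$ and an edge $xy$ ($x\ne y$) iff $\tau_T(\mathrm{lca}_T(x,y))=\tau_S(\mathrm{lca}_S(\sigma(x),\sigma(y)))$. *)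

(* Defs.v *)
From HB Require Import structures.
From mathcomp Require Import all_boot all_order all_algebra.
From mathcomp Require Import reals.
Set Implicit Arguments. Unset Strict Implicit. Unset Printing Implicit Defensive.
Import Order.TTheory GRing.Theory Num.Theory.

(* A tree is given by its vertex finType, the planted vertex 0_T and the parent
   map par (par 0_T = 0_T).  The edges are {par v, v} for v <> 0_T.  Every vertex
   reaches 0_T by iterating par, so the graph is a tree rooted at 0_T. *)

Definition childrenP (V : finType) (z : V) (p : V -> V) (v : V) : {set V} :=
  [set u | (u != z) && (p u == v)].

Record planted_tree := PlantedTree {
  vert :> finType;
  zero : vert;
  par : vert -> vert;
  par_zero : par zero = zero;
  reach_zero : forall v, fconnect par v zero;
  zero_deg1 : #|childrenP zero par zero| = 1;
  inner_ge2 : forall v, v != zero -> childrenP zero par v != set0 ->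
              2 <= #|childrenP zero par v|
}.

Definition children (T : planted_tree) (v : T) : {set T} :=
  childrenP (zero T) (@par T) v.

(* leaves L(T): vertices without children (0_T always has one child) *)
Definition leaves (T : planted_tree) : {set T} :=
  [set v : T | children v == set0].

(* y \preceq_T x : x lies on the path from 0_T to y *)
Definition tle (T : planted_tree) (y x : T) : bool := fconnect (@par T) y x.
Definition tlt (T : planted_tree) (y x : T) : bool := (y != x) && tle y x.

Definition is_lca (T : planted_tree) (x y z : T) : bool :=
  [&& tle x z, tle y z & [forall w : T, (tle x w && tle y w) ==> tle z w]].

Definition time_map (R : realType) (T : planted_tree) (tau : T -> R) : Prop :=
  forall x y : T, tlt x y -> (tau x < tau y)%R.

(* mu x = inl s  means  mu(x) = s \in V(S);
   mu x = inr v  means  mu(x) = the edge (par v) v of S (requires v <> 0_S). *)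
Definition relaxed_scenario (R : realType) (T S : planted_tree)
  (sigma : T -> S) (mu : T -> S + S) (tauT : T -> R) (tauS : S -> R) : Prop :=
  time_map tauT /\ time_map tauS /\
      (forall x, x \in leaves T -> sigma x \in leaves S) /\
      (forall x v, mu x = inr v -> v != zero S) /\
      (forall x, mu x = inl (zero S) <-> x = zero T) /\
      (forall x, (exists2 s, mu x = inl s & s \in leaves S) <-> x \in leaves T) /\
      (forall x, x \in leaves T -> mu x = inl (sigma x)) /\
      (forall x s, mu x = inl s -> tauS s = tauT x) /\
      (forall x v, mu x = inr v -> (tauS v < tauT x)%R /\ (tauT x < tauS (par v))%R).

Definition edt_rel (R : realType) (T S : planted_tree)
  (sigma : T -> S) (tauT : T -> R) (tauS : S -> R) : rel T :=
  fun x y => (x != y) && [exists z : T, exists z' : S,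
     [&& is_lca x y z, is_lca (sigma x) (sigma y) z' & tauT z == tauS z']].

Section Graphs.
Variable V : finType.
Variable e : rel V.

Definition is_clique (K : {set V}) : bool :=
  [forall x in K, forall y in K, (x != y) ==> e x y].

Definition clique_number (A : {set V}) : nat :=
  \max_(K : {set V} | (K \subset A) && is_clique K) #|K|.

Definition proper_colouring (A : {set V}) (f : {ffun V -> 'I_#|V|}) : bool :=
  [forall x in A, forall y in A, ((x != y) && e x y) ==> (f x != f y)].

(* chromatic number: least number of colours used by a proper colouring
   (#|V| colours always suffice) *)
Definition chromatic_number (A : {set V}) : nat :=
  \big[minn/#|V|]_(f : {ffun V -> 'I_#|V|} | proper_colouring A f) #|f @: A|.

Definition perfect_on (W : {set V}) : Prop :=
  forall A : {set V}, A \subset W -> chromatic_number A = clique_number A.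
End Graphs.

(* Main.v *)
Require Import Defs.
From mathcomp Require Import all_boot all_order all_algebra.
From mathcomp Require Import reals.
From HB Require Import structures.
From mathcomp Require Import zify.
Set Implicit Arguments. Unset Strict Implicit. Unset Printing Implicit Defensive.
Section Perf.
Variable V : finType.
Variable e : rel V.

Definition stable (I : {set V}) := forall x y, x \in I -> y \in I -> x != y -> ~~ e x y.

Lemma clique_le (A K : {set V}) : K \subset A -> is_clique e K -> #|K| <= clique_number e A.
Proof. by move=> sKA cK; apply: (leq_bigmax_cond K); rewrite sKA cK. Qed.

Lemma clique_max_ex (A : {set V}) :
  exists K : {set V}, [/\ K \subset A, is_clique e K & #|K| = clique_number e A].
Proof.
rewrite /clique_number.
have P0 : (set0 \subset A) && is_clique e set0.
  by rewrite sub0set; apply/forallP => x; apply/implyP; rewrite inE.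
rewrite (bigmax_eq_arg set0 P0).
case: arg_maxnP => // K /andP[sKA cK] _.
by exists K.
Qed.

Lemma clique1 (x : V) : is_clique e [set x].
Proof.
apply/forallP => y; apply/implyP; rewrite inE => /eqP->.
apply/forallP => z; apply/implyP; rewrite inE => /eqP->; by rewrite eqxx.
Qed.

Lemma clique_number_gt0 (A : {set V}) x : x \in A -> 0 < clique_number e A.
Proof.
move=> xA; apply: leq_trans (clique_le _ (clique1 x)); first by rewrite cards1.
by rewrite sub1set.
Qed.

Lemma clique_number_le_card (A : {set V}) : clique_number e A <= #|A|.
Proof.
by apply/bigmax_leqP => K /andP[sKA _]; apply: subset_leq_card.
Qed.

Lemma bigmin_le_seq (I : eqType) (r : seq I) (P : pred I) (F : I -> nat) n i0 :
  i0 \in r -> P i0 -> \big[minn/n]_(i <- r | P i) F i <= F i0.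
Proof.
move=> + Pi0; elim: r => // h t ih; rewrite inE big_cons.
move=> /predU1P[<-|i0t]; first by rewrite Pi0 geq_minl.
case: ifPn => _; last exact: ih.
by rewrite geq_min ih // orbT.
Qed.

Lemma chrom_le (A : {set V}) f : proper_colouring e A f -> chromatic_number e A <= #|f @: A|.
Proof.
move=> pf; rewrite /chromatic_number.
by apply: (@bigmin_le_seq _ _ (fun g => proper_colouring e A g) (fun g => #|g @: A|)) => //; rewrite mem_index_enum.
Qed.

Lemma chrom_ge (A : {set V}) : clique_number e A <= chromatic_number e A.
Proof.
rewrite /chromatic_number; elim/big_ind: _.
- by apply: leq_trans (clique_number_le_card A) _; apply: max_card.
- by move=> a b ha hb; rewrite leq_min ha hb.
move=> f pf.
have [K [sKA cK <-]] := clique_max_ex A.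
have inj : {in K &, injective f}.
  move=> x y xK yK fxy; apply/eqP; apply/negPn/negP => nxy.
  have exy : e x y.
    by move/forallP: cK => /(_ x) /implyP /(_ xK) /forallP /(_ y) /implyP /(_ yK) /implyP; apply.
  move/forallP: pf => /(_ x) /implyP /(_ (subsetP sKA _ xK)) /forallP /(_ y) /implyP
     /(_ (subsetP sKA _ yK)) /implyP; rewrite nxy exy /= fxy eqxx; by move=> /(_ isT).
rewrite -(card_in_imset inj); apply: subset_leq_card; exact: imsetS.
Qed.

Hypothesis Hst : forall A : {set V}, A != set0 -> exists I : {set V},
  [/\ I \subset A, stable I &
      forall K : {set V}, K \subset A -> is_clique e K -> #|K| = clique_number e A ->
         K :&: I != set0].

Lemma colour_ex (A : {set V}) : exists f : {ffun V -> 'I_#|V|},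
  proper_colouring e A f /\ #|f @: A| <= clique_number e A.
Proof.
move: {2}#|A| (leqnn #|A|) => n; elim: n A => [|n IH] A.
  rewrite leqn0 cards_eq0 => /eqP->.
  exists [ffun x => enum_rank x]; split.
    by apply/forallP => x; apply/implyP; rewrite inE.
  by rewrite imset0 cards0.
move=> hA.
have [->|nA] := eqVneq A set0.
  exists [ffun x => enum_rank x]; split.
    by apply/forallP => x; apply/implyP; rewrite inE.
  by rewrite imset0 cards0.
have [I [sIA stI mI]] := Hst nA.
have [x0 x0A] : exists x, x \in A by apply/set0Pn.
have om0 := clique_number_gt0 x0A.
have [K0 [sK0 cK0 eK0]] := clique_max_ex A.
have I0 : I != set0.
  apply/negP => /eqP I0; move: (mI K0 sK0 cK0 eK0); by rewrite I0 setI0 eqxx.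
have ltA : #|A :\: I| <= n.
  rewrite -ltnS; apply: leq_trans hA; rewrite -(cardsID I A).
  rewrite -[X in X < _]add0n ltn_add2r card_gt0.
  by rewrite (setIidPr sIA).
have [g [pg cg]] := IH _ ltA.
have ltom : clique_number e (A :\: I) < clique_number e A.
  have [K [sK cK eK]] := clique_max_ex (A :\: I).
  rewrite ltn_neqAle; apply/andP; split.
    apply/eqP => eqK; rewrite eqK in eK.
    have sKA : K \subset A by apply: subset_trans sK (subsetDl _ _).
    have : K :&: I = set0.
      apply/setP => z; rewrite !inE; apply/negbTE/negP => /andP[zK zI].
      by move: (subsetP sK z zK); rewrite inE zI.
    by move=> h; move: (mI K sKA cK eK); rewrite h eqxx.
  rewrite -eK; apply: clique_le cK; by apply: subset_trans sK (subsetDl _ _).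
have [i ni] : exists i : 'I_#|V|, i \notin g @: (A :\: I).
  apply/existsP; rewrite -negb_forall; apply/negP => /forallP hall.
  have : #|g @: (A :\: I)| >= #|V|.
    by rewrite -[X in X <= _]card_ord; apply: subset_leq_card; apply/subsetP => z _; apply: hall.
  apply/negP; rewrite -ltnNge; apply: leq_ltn_trans cg _; apply: leq_trans ltom _.
  by apply: leq_trans (clique_number_le_card A) (max_card _).
exists [ffun x => if x \in I then i else g x]; split.
  apply/forallP => x; apply/implyP => xA; apply/forallP => y; apply/implyP => yA.
  apply/implyP => /andP[nxy exy]; rewrite !ffunE.
  case: ifP => xI; case: ifP => yI.
  - by move: (stI x y xI yI nxy); rewrite exy.
  - apply/eqP => hi; move/negP: ni; apply; rewrite hi; apply: imset_f; by rewrite inE yI.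
  - apply/eqP => hi; move/negP: ni; apply; rewrite -hi; apply: imset_f; by rewrite inE xI.
  - move/forallP: pg => /(_ x); rewrite inE xI xA /= => /forallP /(_ y); rewrite inE yI yA /=.
    by rewrite nxy exy.
have sub : [ffun x => if x \in I then i else g x] @: A \subset i |: g @: (A :\: I).
  apply/subsetP => z /imsetP[x xA ->]; rewrite ffunE !inE; case: ifP => xI.
    by rewrite eqxx.
  by rewrite imset_f ?orbT // inE xI xA.
apply: leq_trans (subset_leq_card sub) _; rewrite cardsU1 ni add1n.
by apply: leq_trans ltom; rewrite ltnS.
Qed.

Lemma perfect_of_stable (W : {set V}) : perfect_on e W.
Proof.
move=> A _; apply/eqP; rewrite eqn_leq chrom_ge andbT.
have [f [pf cf]] := colour_ex A.
exact: leq_trans (chrom_le pf) cf.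
Qed.
End Perf.

Lemma arith1 (b p k : nat) : b + p + k = p + k + b.
Proof. lia. Qed.
Lemma arith2 (p k1 q k2 n1 n2 : nat) : n1 + n2 = k1 + k2 -> n1 + p + (n2 + q) = p + k1 + (q + k2).
Proof. lia. Qed.

Section Cells.
Variable V : finType.
Variable e : rel V.

Lemma cliqueP (K : {set V}) :
  reflect (forall x y, x \in K -> y \in K -> x != y -> e x y) (is_clique e K).
Proof.
apply: (iffP forallP) => [h x y xK yK nxy|h x].
  by move: (h x); rewrite xK /= => /forallP /(_ y); rewrite yK nxy.
apply/implyP => xK; apply/forallP => y; apply/implyP => yK; apply/implyP; exact: h.
Qed.

Lemma clique_sub (K L : {set V}) : K \subset L -> is_clique e L -> is_clique e K.
Proof.
move=> sKL /cliqueP cL; apply/cliqueP => x y xK yK; apply: cL; exact: (subsetP sKL).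
Qed.

Variable A : {set V}.
Variables r c : rel V.
Hypothesis r_refl : forall x, r x x.
Hypothesis c_refl : forall x, c x x.
Hypothesis r_sym : forall x y, r x y = r y x.
Hypothesis c_sym : forall x y, c x y = c y x.
Hypothesis r_trans : forall x y z, r x y -> r y z -> r x z.
Hypothesis c_trans : forall x y z, c x y -> c y z -> c x z.
Hypothesis e_rc : forall x y, e x y -> r x y = c x y.
Hypothesis Hadj : forall x y, x \in A -> y \in A -> ~~ r x y -> ~~ c x y -> e x y.

Definition cell (y : V) : {set V} := [set z | r y z && c y z].

Lemma clique_rc (K : {set V}) x y : is_clique e K -> x \in K -> y \in K -> r x y = c x y.
Proof.
move=> /cliqueP cK xK yK; have [->|nxy] := eqVneq x y; first by rewrite r_refl c_refl.
exact: e_rc (cK _ _ xK yK nxy).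
Qed.

Lemma clique_union (K L : {set V}) : K \subset A -> L \subset A ->
  is_clique e K -> is_clique e L ->
  (forall a b, a \in K -> b \in L -> ~~ r a b && ~~ c a b) -> is_clique e (K :|: L).
Proof.
move=> sKA sLA /cliqueP cK /cliqueP cL h; apply/cliqueP => x y; rewrite !inE.
move=> /orP[xK|xL] /orP[yK|yL] nxy.
- exact: cK.
- by case/andP: (h x y xK yL) => h1 h2; apply: Hadj => //; [exact: (subsetP sKA)|exact: (subsetP sLA)].
- case/andP: (h y x yK xL) => h1 h2; apply: Hadj; [exact: (subsetP sLA)|exact: (subsetP sKA)| |].
  by rewrite r_sym. by rewrite c_sym.
- exact: cL.
Qed.

Lemma card_disjU (K L : {set V}) : (forall a, a \in K -> a \notin L) -> #|K :|: L| = #|K| + #|L|.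
Proof.
move=> h; rewrite -cardsUI; have -> : K :&: L = set0.
  by apply/setP => z; rewrite !inE; apply/negbTE/negP => /andP[/h /negP].
by rewrite cards0 addn0.
Qed.

Lemma exchange n (K1 K2 : {set V}) v : #|K1| <= n -> K1 \subset A -> K2 \subset A ->
  is_clique e K1 -> is_clique e K2 -> (forall z, z \in K2 -> ~~ c v z) ->
  exists N1 N2 : {set V}, [/\ N1 \subset K1 :|: K2, N2 \subset K1 :|: K2,
     is_clique e N1 /\ is_clique e N2, #|N1| + #|N2| = #|K1| + #|K2| &
     (forall z, z \in N2 -> ~~ c v z /\ exists2 w, w \in K1 & r z w)].
Proof.
elim: n K1 K2 v => [|n IH] K1 K2 v hn sK1 sK2 cK1 cK2 av.
  move: hn; rewrite leqn0 cards_eq0 => /eqP ->.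
  exists K2, set0; split => //; rewrite ?set0U ?sub0set ?cards0 ?addn0 //.
    split => //; apply/cliqueP => x y; by rewrite inE.
  by move=> z; rewrite inE.
case: (boolP [exists y in K1, c v y]) => [/existsP[y /andP[yK1 cvy]] | hno]; last first.
  exists K2, K1; split; rewrite ?subsetUr ?subsetUl 1?addnC //.
  move=> z zK1; split; last by exists z; rewrite ?r_refl.
  apply/negP => cvz; move/negP: hno; apply; apply/existsP; exists z; by rewrite zK1.
pose P := K1 :&: cell y.
have inP : forall z, z \in K1 -> (r y z || c v z) -> z \in P.
  move=> z zK1 hz; rewrite !inE zK1 /=.
  case/orP: hz => hz.
    by rewrite hz /= -(clique_rc cK1 yK1 zK1).
  have cyz : c y z by apply: (c_trans _ hz); rewrite c_sym.
  by rewrite (clique_rc cK1 yK1 zK1) cyz.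
have PK1 : P \subset K1 by apply: subsetIl.
have hP : forall b, b \in P -> r y b /\ c v b.
  move=> b; rewrite !inE => /and3P[_ h1 h2]; split => //; exact: c_trans cvy h2.
have cardK1 : #|K1| = #|P| + #|K1 :\: cell y| by rewrite cardsID.
case: (boolP [exists y2 in K2, r y y2]) => [/existsP[y2 /andP[y2K2 ryy2]] | hno2]; last first.
  have nK2 : forall z, z \in K2 -> ~~ r y z.
    move=> z zK2; apply/negP => ryz; move/negP: hno2; apply; apply/existsP; exists z; by rewrite zK2.
  exists (K2 :|: P), (K1 :\: cell y); split.
  - by apply/subsetP => z; rewrite !inE => /orP[->|/and3P[->]]; rewrite ?orbT.
  - by apply/subsetP => z; rewrite !inE => /andP[_ ->].
  - split; last by apply: clique_sub cK1; apply: subsetDl.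
    apply: clique_union => //; first by apply: subset_trans PK1 sK1.
      by apply: clique_sub cK1.
    move=> a b aK2 bP; have [ryb cvb] := hP _ bP; apply/andP; split.
      apply/negP => rab; move/negP: (nK2 _ aK2); apply; apply: r_trans ryb _; by rewrite r_sym.
    apply/negP => cab; move/negP: (av _ aK2); apply; apply: c_trans cvb _; by rewrite c_sym.
  - rewrite card_disjU; first by rewrite cardK1; apply: arith1.
    by move=> a aK2; apply/negP => /hP [rya _]; move/negP: (nK2 _ aK2); apply.
  - move=> z; rewrite !inE => /andP[zc zK1]; split; last by exists z; rewrite ?r_refl.
    apply/negP => cvz; move: (inP z zK1); rewrite cvz orbT => /(_ isT); rewrite !inE zK1 /=.
    by move/negP: zc.
pose Q := K2 :&: cell y2.
have cardK2 : #|K2| = #|Q| + #|K2 :\: cell y2| by rewrite cardsID.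
have hQ : forall b, b \in Q -> r y b /\ c y2 b /\ b \in K2.
  move=> b; rewrite !inE => /and3P[bK2 h1 h2]; split => //; exact: r_trans ryy2 h1.
have ltK1 : #|K1 :\: cell y| <= n.
  rewrite -ltnS; apply: leq_trans hn; rewrite cardK1 -[X in X < _]add0n ltn_add2r card_gt0.
  by apply/set0Pn; exists y; rewrite !inE yK1 r_refl c_refl.
have av2 : forall z, z \in K2 :\: cell y2 -> ~~ c y2 z.
  move=> z; rewrite !inE => /andP[zc zK2]; apply/negP => cy2z; move/negP: zc; apply.
  by rewrite (clique_rc cK2 y2K2 zK2) cy2z.
have [N1 [N2 [sN1 sN2 [cN1 cN2] cardN hN2]]] :=
  IH (K1 :\: cell y) (K2 :\: cell y2) y2 ltK1
    (subset_trans (subsetDl _ _) sK1) (subset_trans (subsetDl _ _) sK2)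
    (clique_sub (subsetDl _ _) cK1) (clique_sub (subsetDl _ _) cK2) av2.
have hK1' : forall a, a \in K1 :\: cell y -> ~~ r y a /\ ~~ c v a.
  move=> a; rewrite !inE => /andP[ac aK1]; split; apply/negP => h;
  move: (inP a aK1); rewrite h ?orbT => /(_ isT); rewrite !inE aK1 /=; by move/negP: ac.
have hK2' : forall a, a \in K2 :\: cell y2 -> ~~ r y a /\ ~~ c v a.
  move=> a; rewrite !inE => /andP[ac aK2]; split; last exact: av.
  apply/negP => rya; move/negP: ac; apply.
  have ry2a : r y2 a by apply: (r_trans _ rya); rewrite r_sym.
  by rewrite ry2a -(clique_rc cK2 y2K2 aK2).
have hN : forall a, a \in (K1 :\: cell y) :|: (K2 :\: cell y2) -> ~~ r y a /\ ~~ c v a.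
  by move=> a; rewrite inE => /orP[/hK1'|/hK2'].
have sK12 : (K1 :\: cell y) :|: (K2 :\: cell y2) \subset K1 :|: K2.
  by apply: setUSS; apply: subsetDl.
have sKA : K1 :|: K2 \subset A by rewrite subUset sK1 sK2.
exists (N1 :|: P), (N2 :|: Q); split.
- by rewrite subUset (subset_trans sN1 sK12) (subset_trans PK1 (subsetUl _ _)).
- by rewrite subUset (subset_trans sN2 sK12) (subset_trans (subsetIl _ _) (subsetUr _ _)).
- split.
  + apply: clique_union => //.
    * exact: subset_trans sN1 (subset_trans sK12 sKA).
    * exact: subset_trans PK1 sK1.
    * exact: clique_sub cK1.
    move=> a b aN1 bP; have [nra ncva] := hN a (subsetP sN1 a aN1).
    have [ryb cvb] := hP _ bP; apply/andP; split.
      apply/negP => rab; move/negP: nra; apply; apply: r_trans ryb _; by rewrite r_sym.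
    apply/negP => cab; move/negP: ncva; apply; apply: c_trans cvb _; by rewrite c_sym.
  + apply: clique_union => //.
    * exact: subset_trans sN2 (subset_trans sK12 sKA).
    * exact: subset_trans (subsetIl _ _) sK2.
    * exact: clique_sub (subsetIl _ _) cK2.
    move=> a b aN2 bQ; have [nca [w wK1' raw]] := hN2 a aN2.
    have [ryb [cy2b _]] := hQ _ bQ; apply/andP; split.
      apply/negP => rab; have [nryw _] := hK1' w wK1'; move/negP: nryw; apply.
      apply: r_trans ryb _; apply: (r_trans _ raw); by rewrite r_sym.
    apply/negP => cab; move/negP: nca; apply; apply: c_trans cy2b _; by rewrite c_sym.
- rewrite !card_disjU.
  + by rewrite cardK1 cardK2; apply: arith2.
  + move=> a aN2; apply/negP => /hQ [_ [cy2a _]]; have [nca _] := hN2 a aN2.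
    by move/negP: nca.
  + move=> a aN1; apply/negP => /hP [rya _]; have [nra _] := hN a (subsetP sN1 a aN1).
    by move/negP: nra.
- move=> z; rewrite in_setU => /orP[zN2|zQ].
    have [_ [w wK1' rzw]] := hN2 z zN2; have [_ ncv] := hN z (subsetP sN2 z zN2).
    split => //; exists w => //; by move: wK1'; rewrite inE => /andP[].
  have [ryz [_ zK2]] := hQ _ zQ; split; first exact: av.
  by exists y => //; rewrite r_sym.
Qed.


Definition maxcl (K : {set V}) := [&& K \subset A, is_clique e K & #|K| == clique_number e A].

Lemma key x0 : x0 \in A ->
  (forall K, maxcl K -> exists2 y, y \in K & r x0 y) \/
  (forall K, maxcl K -> exists2 y, y \in K & c x0 y).
Proof.
move=> x0A.
case: (boolP [forall K, maxcl K ==> [exists y in K, r x0 y]]) => [h|].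
  left => K mK; move/forallP: h => /(_ K); rewrite mK /= => /existsP[y /andP[yK ry]].
  by exists y.
rewrite negb_forall => /existsP[K1]; rewrite negb_imply => /andP[mK1 nK1].
case: (boolP [forall K, maxcl K ==> [exists y in K, c x0 y]]) => [h|].
  right => K mK; move/forallP: h => /(_ K); rewrite mK /= => /existsP[y /andP[yK ry]].
  by exists y.
rewrite negb_forall => /existsP[K2]; rewrite negb_imply => /andP[mK2 nK2].
exfalso.
case/and3P: mK1 => sK1 cK1 /eqP eK1; case/and3P: mK2 => sK2 cK2 /eqP eK2.
have av : forall z, z \in K2 -> ~~ c x0 z.
  move=> z zK2; apply/negP => cz; move/negP: nK2; apply; apply/existsP; exists z; by rewrite zK2.
have ar : forall z, z \in K1 -> ~~ r x0 z.
  move=> z zK1; apply/negP => rz; move/negP: nK1; apply; apply/existsP; exists z; by rewrite zK1.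
have [N1 [N2 [sN1 sN2 [cN1 cN2] cardN hN2]]] := exchange (leqnn #|K1|) sK1 sK2 cK1 cK2 av.
have sKA : K1 :|: K2 \subset A by rewrite subUset sK1 sK2.
have x0N2 : forall z, z \in N2 -> ~~ r x0 z && ~~ c x0 z.
  move=> z zN2; have [ncz [w wK1 rzw]] := hN2 z zN2; rewrite ncz andbT.
  apply/negP => rz; move/negP: (ar w wK1); apply; exact: r_trans rz rzw.
have cl : is_clique e ([set x0] :|: N2).
  apply: clique_union => //; first by rewrite sub1set.
  - exact: subset_trans sN2 sKA.
  - exact: clique1.
  by move=> a b; rewrite inE => /eqP -> /x0N2.
have le1 : #|[set x0] :|: N2| <= clique_number e A.
  apply: clique_le cl; rewrite subUset sub1set x0A; exact: subset_trans sN2 sKA.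
have le2 : #|N1| <= clique_number e A by apply: clique_le cN1; exact: subset_trans sN1 sKA.
move: le1; rewrite card_disjU; last first.
  by move=> a; rewrite inE => /eqP ->; apply/negP => /x0N2; rewrite r_refl.
rewrite cards1 => le1.
have : #|N1| + #|N2| < #|K1| + #|K2|.
  rewrite eK1 eK2; rewrite -addnS; exact: leq_add le2 le1.
by rewrite cardN ltnn.
Qed.

Definition goodI (B I : {set V}) := [/\ I \subset B, stable e I &
  forall K : {set V}, K \subset B -> is_clique e K -> #|K| = clique_number e B -> K :&: I != set0].

Lemma cell_eq y1 y2 a b : a \in cell y1 -> b \in cell y2 -> r a b -> c a b -> cell y1 = cell y2.
Proof.
rewrite !inE => /andP[r1 c1] /andP[r2 c2] rab cab.
have r12 : r y1 y2 by apply: (r_trans r1); apply: (r_trans rab); rewrite r_sym.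
have c12 : c y1 y2 by apply: (c_trans c1); apply: (c_trans cab); rewrite c_sym.
apply/setP => z; rewrite !inE; apply/idP/idP => /andP[rz cz]; apply/andP; split.
- by apply: r_trans rz; rewrite r_sym.
- by apply: c_trans cz; rewrite c_sym.
- exact: r_trans r12 rz.
- exact: c_trans c12 cz.
Qed.

Variable F : {set V} -> {set V}.
Hypothesis hF : forall y, y \in A -> goodI (A :&: cell y) (F (A :&: cell y)).
Variable q : rel V.
Variable x : V.
Hypothesis q_sym : forall a b, q a b = q b a.
Hypothesis q_trans : forall a b d, q a b -> q b d -> q a d.
Hypothesis hq : forall y a, r y a -> c y a -> q y a.
Hypothesis hqe : forall a b, q a b -> e a b -> r a b && c a b.
Hypothesis hmax : forall K, maxcl K -> exists2 y, y \in K & q x y.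

Lemma build : goodI A (\bigcup_(y in A | q x y) F (A :&: cell y)).
Proof.
split.
- apply/bigcupsP => y /andP[yA _]; case: (hF yA) => s _ _; exact: subset_trans s (subsetIl _ _).
- move=> a b /bigcupP[y1 /andP[y1A qy1] aF] /bigcupP[y2 /andP[y2A qy2] bF] nab.
  case: (hF y1A) => s1 st1 _; case: (hF y2A) => s2 _ _.
  have ac1 : a \in cell y1 by move: (subsetP s1 a aF); rewrite inE => /andP[].
  have bc2 : b \in cell y2 by move: (subsetP s2 b bF); rewrite inE => /andP[].
  apply/negP => eab.
  have qab : q a b.
    move: ac1 bc2; rewrite !inE => /andP[r1 c1] /andP[r2 c2].
    have q1 := hq r1 c1; have q2 := hq r2 c2.
    apply: (q_trans (b := y1)); first by rewrite q_sym.
    apply: (q_trans (b := x)); first by rewrite q_sym.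
    exact: q_trans qy2 q2.
  case/andP: (hqe qab eab) => rab cab.
  have ce := cell_eq ac1 bc2 rab cab.
  rewrite -ce in bF.
  by move: (st1 a b aF bF nab); rewrite eab.
- move=> K sKA cK eK.
  have mK : maxcl K by rewrite /maxcl sKA cK eK eqxx.
  have [y yK qxy] := hmax mK.
  have yA : y \in A := subsetP sKA y yK.
  case: (hF yA) => sF _ mF.
  have sKC : K :&: cell y \subset A :&: cell y by apply: setSI.
  have hK : #|K :&: cell y| = clique_number e (A :&: cell y).
    apply/eqP; rewrite eqn_leq; apply/andP; split.
      apply: clique_le sKC _; exact: clique_sub (subsetIl _ _) cK.
    have [KC [sKC' cKC eKC]] := clique_max_ex e (A :&: cell y).
    rewrite -eKC.
    have cl : is_clique e ((K :\: cell y) :|: KC).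
      apply: clique_union.
      - exact: subset_trans (subsetDl _ _) sKA.
      - exact: subset_trans sKC' (subsetIl _ _).
      - exact: clique_sub (subsetDl _ _) cK.
      - exact: cKC.
      move=> a b; rewrite !inE => /andP[nac aK] bC.
      move: (subsetP sKC' b bC); rewrite !inE => /and3P[_ ryb cyb].
      have nry : ~~ r y a.
        apply/negP => rya; move/negP: nac; apply; by rewrite rya -(clique_rc cK yK aK).
      have ncy : ~~ c y a.
        apply/negP => cya; move/negP: nac; apply; by rewrite (clique_rc cK yK aK) cya.
      apply/andP; split.
        apply/negP => rab; move/negP: nry; apply; apply: (r_trans ryb); by rewrite r_sym.
      apply/negP => cab; move/negP: ncy; apply; apply: (c_trans cyb); by rewrite c_sym.
    have le : #|(K :\: cell y) :|: KC| <= clique_number e A.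
      apply: clique_le cl; rewrite subUset (subset_trans (subsetDl _ _) sKA).
      exact: subset_trans sKC' (subsetIl _ _).
    move: le; rewrite card_disjU; last first.
      move=> a; rewrite !inE => /andP[nac _]; apply/negP => aC.
      by move: (subsetP sKC' a aC); rewrite !inE (negbTE nac) andbF.
    rewrite -eK -(cardsID (cell y) K) => h; rewrite -(leq_add2r #|K :\: cell y|).
    by rewrite addnC.
  have := mF _ sKC (clique_sub (subsetIl _ _) cK) hK.
  case/set0Pn => z; rewrite !inE => /andP[/andP[zK _] zF].
  apply/set0Pn; exists z; rewrite inE zK /=; apply/bigcupP; exists y => //.
  by rewrite yA qxy.
Qed.

End Cells.

Import Order.TTheory GRing.Theory Num.Theory.

Section Core.
Variable R : realType.
Variable V : finType.
Variable e : rel V.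
Variables d1 d2 : V -> V -> R.
Hypothesis He : forall x y, e x y = (x != y) && (d1 x y == d2 x y).
Hypothesis d1_sym : forall x y, d1 x y = d1 y x.
Hypothesis d2_sym : forall x y, d2 x y = d2 y x.
Hypothesis um1 : forall x y z, ((d1 x z <= d1 x y) || (d1 x z <= d1 y z))%R.
Hypothesis um2 : forall x y z, ((d2 x z <= d2 x y) || (d2 x z <= d2 y z))%R.

Definition ltrel (d : V -> V -> R) (t : R) : rel V := fun x y => (x == y) || (d x y < t)%R.

Lemma ltrel_refl d t x : ltrel d t x x.
Proof. by rewrite /ltrel eqxx. Qed.

Lemma ltrel_sym d t : (forall x y, d x y = d y x) -> forall x y, ltrel d t x y = ltrel d t y x.
Proof. by move=> ds x y; rewrite /ltrel eq_sym ds. Qed.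

Lemma ltrel_trans d t : (forall x y z, ((d x z <= d x y) || (d x z <= d y z))%R) ->
  forall x y z, ltrel d t x y -> ltrel d t y z -> ltrel d t x z.
Proof.
move=> um x y z; rewrite /ltrel.
case/orP => [/eqP -> //|hxy]; case/orP => [/eqP <- |hyz]; first by rewrite hxy orbT.
case: eqP => //= _; case/orP: (um x y z) => h.
  exact: le_lt_trans h hxy.
exact: le_lt_trans h hyz.
Qed.

Definition stableb (I : {set V}) := [forall x in I, forall y in I, (x != y) ==> ~~ e x y].
Definition goodb (B I : {set V}) := [&& I \subset B, stableb I &
  [forall K : {set V}, [&& K \subset B, is_clique e K & #|K| == clique_number e B] ==> (K :&: I != set0)]].

Lemma goodP B I : reflect (goodI e B I) (goodb B I).
Proof.
apply: (iffP and3P) => [[s st m]|[s st m]]; split => //.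
- move=> x y xI yI nxy; move/forallP: st => /(_ x); rewrite xI /= => /forallP /(_ y).
  by rewrite yI nxy.
- move=> K sK cK eK; move/forallP: m => /(_ K); by rewrite sK cK eK eqxx.
- apply/forallP => x; apply/implyP => xI; apply/forallP => y; apply/implyP => yI.
  apply/implyP; exact: st.
- apply/forallP => K; apply/implyP => /and3P[sK cK /eqP eK]; exact: m.
Qed.

Lemma core n (A : {set V}) : #|A| <= n -> A != set0 -> exists I, goodI e A I.
Proof.
elim: n A => [|n IH] A hA nA.
  by move: nA hA; rewrite -card_gt0; case: #|A|.
case: (boolP [exists x in A, exists y in A, x != y]); last first.
  rewrite negb_exists => /forallP hall.
  have one : forall x y, x \in A -> y \in A -> x = y.
    move=> x y xA yA; move: (hall x); rewrite xA /= negb_exists => /forallP /(_ y).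
    by rewrite yA /= negbK => /eqP.
  exists A; split => //.
    by move=> x y xA yA; rewrite (one x y xA yA) eqxx.
  move=> K sK cK eK; rewrite (setIidPl sK).
  have [x0 x0A] : exists x, x \in A by apply/set0Pn.
  by rewrite -card_gt0 eK; exact: clique_number_gt0 x0A.
case/existsP => a0 /andP[a0A /existsP[b0 /andP[b0A nab0]]].
pose P := fun p : V * V => [&& p.1 \in A, p.2 \in A & p.1 != p.2].
pose Fm := fun p : V * V => Num.max (d1 p.1 p.2) (d2 p.1 p.2).
have P0 : P (a0, b0) by rewrite /P /= a0A b0A nab0.
case: (@arg_maxP _ _ _ (a0, b0) P Fm P0) => [[a b]] /and3P[/= aA bA nab] hmax.
set t := Fm (a, b).
pose r := ltrel d1 t. pose c := ltrel d2 t.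
have r_refl : forall x, r x x by move=> x; exact: ltrel_refl.
have c_refl : forall x, c x x by move=> x; exact: ltrel_refl.
have r_sym : forall x y, r x y = r y x by exact: ltrel_sym.
have c_sym : forall x y, c x y = c y x by exact: ltrel_sym.
have r_trans : forall x y z, r x y -> r y z -> r x z by exact: ltrel_trans.
have c_trans : forall x y z, c x y -> c y z -> c x z by exact: ltrel_trans.
have e_rc : forall x y, e x y -> r x y = c x y.
  by move=> x y; rewrite He /r /c /ltrel => /andP[/negbTE -> /eqP ->].
have Hadj : forall x y, x \in A -> y \in A -> ~~ r x y -> ~~ c x y -> e x y.
  move=> x y xA yA; rewrite /r /c /ltrel !negb_or -!leNgt => /andP[nxy h1] /andP[_ h2].
  have := hmax (x, y); rewrite /P /= xA yA nxy /= => /(_ isT); rewrite ge_max => /andP[g1 g2].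
  rewrite He nxy /=; apply/eqP.
  by rewrite (@le_anti _ _ (d1 x y) t) ?h1 ?g1 // (@le_anti _ _ (d2 x y) t) ?h2 ?g2.
have notboth : ~~ (r a b && c a b).
  rewrite /r /c /ltrel (negbTE nab) /=; apply/negP => /andP[h1 h2].
  by have := ltxx t; rewrite {1}/t /Fm /= gt_max h1 h2.
pose F := fun B : {set V} => odflt set0 [pick I | goodb B I].
have hF : forall y, y \in A -> goodI e (A :&: cell r c y) (F (A :&: cell r c y)).
  move=> y yA.
  have yC : y \in A :&: cell r c y by rewrite !inE yA r_refl c_refl.
  have ltC : #|A :&: cell r c y| <= n.
    rewrite -ltnS; apply: leq_trans hA; apply: proper_card; apply/properP; split.
      exact: subsetIl.
    case: (boolP (a \in cell r c y)) => ac; last by exists a => //; rewrite inE (negbTE ac) andbF.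
    case: (boolP (b \in cell r c y)) => bc; last by exists b => //; rewrite inE (negbTE bc) andbF.
    move: ac bc notboth; rewrite !inE => /andP[ra ca] /andP[rb cb].
    have rab : r a b by apply: (r_trans a y b) => //; rewrite r_sym.
    have cab : c a b by apply: (c_trans a y b) => //; rewrite c_sym.
    by rewrite rab cab.
  have nC : A :&: cell r c y != set0 by apply/set0Pn; exists y.
  have [I gI] := IH _ ltC nC.
  rewrite /F; case: pickP => [I' /goodP //|none].
  by move/goodP: gI; rewrite none.
have x0A := aA.
case: (key r_refl c_refl r_sym c_sym r_trans c_trans e_rc Hadj aA) => hk.
  eexists; apply: (build r_refl c_refl r_sym c_sym r_trans c_trans e_rc Hadj hF (q := r) (x := a)
     r_sym r_trans (fun _ _ h _ => h) _ hk).
  by move=> u w ruw euw; rewrite -(e_rc _ _ euw) andbb.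
eexists; apply: (build r_refl c_refl r_sym c_sym r_trans c_trans e_rc Hadj hF (q := c) (x := a)
   c_sym c_trans (fun _ _ _ h => h) _ hk).
by move=> u w cuw euw; rewrite (e_rc _ _ euw) andbb.
Qed.
End Core.

Section Trees.
Variable T : planted_tree.

Lemma tle_refl (x : T) : tle x x.
Proof. exact: connect0. Qed.

Lemma tle_trans (x y z : T) : tle x y -> tle y z -> tle x z.
Proof. exact: connect_trans. Qed.

Lemma tle_idx (x a b : T) : tle x a -> tle x b -> findex (@par T) x a <= findex (@par T) x b -> tle a b.
Proof.
move=> xa xb le; rewrite /tle -(iter_findex xa) -(iter_findex xb).
by rewrite -(subnK le) iterD; apply: fconnect_iter.
Qed.

Lemma tle_total (x a b : T) : tle x a -> tle x b -> tle a b || tle b a.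
Proof.
move=> xa xb; case: (leqP (findex (@par T) x a) (findex (@par T) x b)) => h.
  by rewrite (tle_idx xa xb h).
by rewrite (tle_idx xb xa (ltnW h)) orbT.
Qed.

Lemma tle_zero (x : T) : tle x (zero T).
Proof. exact: reach_zero. Qed.

Definition lca (x y : T) : T :=
  [arg min_(w < zero T | tle x w && tle y w) findex (@par T) x w].

Lemma lcaP (x y : T) : is_lca x y (lca x y).
Proof.
rewrite /lca; case: arg_minnP; first by rewrite !tle_zero.
move=> l /andP[xl yl] hmin; rewrite /is_lca xl yl /=; apply/forallP => w.
apply/implyP => /andP[xw yw]; apply: (tle_idx xl xw); apply: hmin; by rewrite xw yw.
Qed.

Variable R : realType.
Variable tau : T -> R.
Hypothesis tm : time_map tau.

Lemma tau_mono (x y : T) : tle x y -> (tau x <= tau y)%R.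
Proof.
move=> xy; case: (eqVneq x y) => [->//|nxy]; apply: ltW; apply: tm; by rewrite /tlt nxy.
Qed.

Lemma lca_tau (x y z : T) : is_lca x y z -> tau z = tau (lca x y).
Proof.
move=> /and3P[xz yz /forallP hz]; have /and3P[xl yl /forallP hl] := lcaP x y.
have h1 : tle z (lca x y) by move: (hz (lca x y)); rewrite xl yl.
have h2 : tle (lca x y) z by move: (hl z); rewrite xz yz.
by apply: le_anti; rewrite !tau_mono.
Qed.

Lemma lca_sym_tau (x y : T) : tau (lca x y) = tau (lca y x).
Proof.
apply: lca_tau; have /and3P[xl yl hl] := lcaP x y; rewrite /is_lca xl yl /=.
apply/forallP => w; move/forallP: hl => /(_ w); by rewrite andbC.
Qed.

Lemma lca_um (x y z : T) :
  ((tau (lca x z) <= tau (lca x y)) || (tau (lca x z) <= tau (lca y z)))%R.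
Proof.
have /and3P[xl1 yl1 _] := lcaP x y; have /and3P[yl2 zl2 _] := lcaP y z.
have /and3P[_ _ /forallP h3] := lcaP x z.
case/orP: (tle_total yl1 yl2) => h.
  apply/orP; right; apply: tau_mono; move: (h3 (lca y z)).
  by rewrite zl2 (tle_trans xl1 h).
apply/orP; left; apply: tau_mono; move: (h3 (lca x y)).
by rewrite xl1 (tle_trans zl2 h).
Qed.
End Trees.

Lemma edt_eq (R : realType) (T S : planted_tree) (sigma : T -> S) (tauT : T -> R) (tauS : S -> R) :
  time_map tauT -> time_map tauS -> forall x y,
  edt_rel sigma tauT tauS x y =
  (x != y) && (tauT (lca x y) == tauS (lca (sigma x) (sigma y))).
Proof.
move=> tmT tmS x y; rewrite /edt_rel; congr (_ && _); apply/idP/idP.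
  case/existsP => z /existsP[z' /and3P[lz lz' /eqP ez]].
  by rewrite -(lca_tau tmT lz) -(lca_tau tmS lz') ez.
move=> /eqP h; apply/existsP; exists (lca x y); apply/existsP; exists (lca (sigma x) (sigma y)).
by rewrite !lcaP h eqxx.
Qed.

Theorem proposition4 (R : realType) (T S : planted_tree)
  (sigma : T -> S) (mu : T -> S + S) (tauT : T -> R) (tauS : S -> R) :
  relaxed_scenario sigma mu tauT tauS ->
  perfect_on (edt_rel sigma tauT tauS) (leaves T).
Proof.
move=> [tmT [tmS _]].
apply: perfect_of_stable => A nA.
apply: (@core R _ _ (fun x y => tauT (lca x y)) (fun x y => tauS (lca (sigma x) (sigma y)))
   (edt_eq sigma tmT tmS) _ _ _ _ #|A| A (leqnn _) nA).
- by move=> x y; apply: lca_sym_tau.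
- by move=> x y; apply: lca_sym_tau.
- by move=> x y z; apply: lca_um.
- by move=> x y z; apply: lca_um.
Qed.
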